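(* Let $m$ and $k$ be positive integers with $3\leq k\leq m/2$, and let $H$ be $\mathrm{Sym}(m)$ or $\mathrm{Alt}(m)$ acting on the set of $k$-element subsets of $\{1,\ldots,m\}$. If $H$ contains a permutation $g$ having at most four cycles in this action, then $m\leq 7$.
   Context: The number of cycles of a permutation is the number of orbits of the cyclic group it generates, fixed points included. Throughout this part of the paper it is assumed that $k\le m/2$. *)

(* Defs.v *)
From mathcomp Require Import all_boot all_fingroup all_solvable.
Set Implicit Arguments. Unset Strict Implicit. Unset Printing Implicit Defensive.
Local Open Scope group_scope.

(* The k-element subsets of {0,...,m-1} (standing for {1,...,m}). *)
Definition ksubsets (m k : nat) : {set {set 'I_m}} :=
  [set A : {set 'I_m} | #|A| == k].

(* Number of cycles of g in its action on k-subsets: the number of orbits of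
   the cyclic group <[g]> acting on k-subsets via A |-> g @: A
   (fixed points included). *)
Definition ncycles_ksub (m k : nat) (g : 'S_m) : nat :=
  #|[set orbit 'P^* <[g]> A | A in ksubsets m k]|.

(* Main.v *)
Require Import Defs.
From mathcomp Require Import all_boot all_fingroup all_solvable zify.
Set Implicit Arguments. Unset Strict Implicit. Unset Printing Implicit Defensive.
Local Open Scope group_scope.

Lemma iter_mul_fix (T : Type) (f : T -> T) y c q : iter c f y = y -> iter (q * c) f y = y.
Proof. by move=> H; elim: q => //= q IH; rewrite mulSn iterD IH H. Qed.

Section S.
Variables (m : nat) (g : 'S_m) (x : 'I_m).
Local Notation T := ('I_m).
Local Notation C := (porbit g x).
Local Notation L := #|porbit g x|.

Lemma memC i y : ((g ^+ i) y \in C) = (y \in C).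
Proof.
apply/idP/idP => H.
  by rewrite -eq_porbit_mem -(porbit_perm g i) eq_porbit_mem.
by rewrite -eq_porbit_mem porbit_perm eq_porbit_mem.
Qed.

Lemma imsetIC i (X : {set T}) : (g ^+ i) @: X :&: C = (g ^+ i) @: (X :&: C).
Proof.
apply/setP => z; rewrite inE; apply/andP/imsetP.
  move=> [/imsetP [y yX ->]]; rewrite memC => yC; by exists y; rewrite // inE yX yC.
move=> [y]; rewrite inE => /andP [yX yC] ->; split; first exact: imset_f.
by rewrite memC.
Qed.

Lemma invC i (X : {set T}) : #|(g ^+ i) @: X :&: C| = #|X :&: C|.
Proof. by rewrite imsetIC card_imset //; exact: perm_inj. Qed.

Lemma periodC i y : y \in C -> (g ^+ (i %% L)) y = (g ^+ i) y.
Proof.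
move=> yC; have eqC : porbit g y = C by apply/eqP; rewrite eq_porbit_mem.
rewrite {2}(divn_eq i L) expgD permM.
have -> : (g ^+ (i %/ L * L)) y = y.
  by rewrite permX; apply: iter_mul_fix; rewrite -eqC iter_porbit.
done.
Qed.

Local Notation orb A := (orbit 'P^* <[g]> A).

Lemma actE (A : {set T}) h : 'P^*%act A h = h @: A.
Proof. by apply: eq_imset. Qed.

Lemma orbP (A B : {set T}) : reflect (exists i, B = (g ^+ i) @: A) (B \in orb A).
Proof.
apply: (iffP orbitP).
  by move=> [h /cycleP [i ->]]; rewrite actE => <-; exists i.
by move=> [i ->]; exists (g ^+ i); rewrite ?mem_cycle // actE.
Qed.

Lemma count_orbits (F : {set {set T}}) t :
  (forall A, A \in F -> #|orb A :&: F| <= t)%N ->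
  (#|F| <= t * #|[set orb A | A in F]|)%N.
Proof.
move=> Ht; rewrite -sum1_card (partition_big_imset (fun A => orb A)) /=.
rewrite mulnC -sum_nat_const; apply: leq_sum => O /imsetP [A0 A0F ->].
rewrite sum1dep_card.
apply: leq_trans (Ht _ A0F); apply: subset_leq_card; apply/subsetP => B.
rewrite !inE => /andP [BF /eqP <-]; rewrite BF andbT; exact: orbit_refl.
Qed.

Definition Sa a := [set P : {set T} | P \subset C & #|P| == a].
Definition Fam a (D : {set T}) := [set P :|: D | P in Sa a].
Definition OF a D := [set orb A | A in Fam a D].

Lemma cap_PD (P D : {set T}) : P \subset C -> D :&: C = set0 -> (P :|: D) :&: C = P.
Proof. by move=> PC DC; rewrite setIUl DC setU0; apply/setIidPl. Qed.

Lemma card_Fam a D : D :&: C = set0 -> #|Fam a D| = 'C(L, a).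
Proof.
move=> DC; rewrite card_in_imset ?cards_draws //.
move=> P Q; rewrite !inE => /andP [PC _] /andP [QC _] E.
by rewrite -(cap_PD PC DC) E cap_PD.
Qed.

Lemma Lpos : (0 < L)%N.
Proof. by rewrite lt0n card_porbit_neq0. Qed.

Lemma orb_Fam a D A : D :&: C = set0 -> A \in Fam a D -> (#|orb A :&: Fam a D| <= L)%N.
Proof.
move=> DC /imsetP [P0]; rewrite inE => /andP [P0C _] ->.
apply: (@leq_trans #|[set (g ^+ (val i)) @: P0 :|: D | i : 'I_L]|); last first.
  by rewrite (leq_trans (leq_imset_card _ _)) // card_ord.
apply: subset_leq_card; apply/subsetP => B; rewrite inE => /andP [/orbP [i ->]] /imsetP [P]; rewrite inE.
move=> /andP [PC _] E.
have EP : P = (g ^+ i) @: P0.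
  by rewrite -(cap_PD PC DC) -E imsetIC cap_PD.
apply/imsetP; exists (Ordinal (ltn_pmod i Lpos)) => //=.
rewrite E EP; congr (_ :|: _); apply: eq_in_imset => y yP0.
by rewrite periodC //; exact: (subsetP P0C).
Qed.

Lemma capFam a D A : D :&: C = set0 -> A \in Fam a D -> #|A :&: C| = a.
Proof.
by move=> DC /imsetP [P]; rewrite inE => /andP [PC /eqP <-] ->; rewrite cap_PD.
Qed.

Lemma OF_disj a b D D' : D :&: C = set0 -> D' :&: C = set0 -> a != b ->
  OF a D :&: OF b D' = set0.
Proof.
move=> DC D'C ab; apply/setP => O; rewrite !inE; apply/negP => /andP [].
move=> /imsetP [A AF ->] /imsetP [B BF E].
have : B \in orb A by rewrite E; exact: orbit_refl.
move=> /orbP [i EB].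
by move: ab; rewrite -(capFam DC AF) -(capFam D'C BF) EB invC eqxx.
Qed.

Lemma Fam_sub k a D : D :&: C = set0 -> (a <= k)%N -> #|D| = (k - a)%N ->
  Fam a D \subset ksubsets m k.
Proof.
move=> DC ak cD; apply/subsetP => A /imsetP [P]; rewrite inE => /andP [PC /eqP cP] ->.
have PD : P :&: D = set0.
  apply/setP => y; rewrite !inE; apply/negP => /andP [yP yD].
  have : y \in D :&: C by rewrite inE yD (subsetP PC).
  by rewrite DC inE.
by rewrite inE cardsU PD cards0 subn0 cP cD subnKC.
Qed.

Lemma OF_sub k a D : D :&: C = set0 -> (a <= k)%N -> #|D| = (k - a)%N ->
  OF a D \subset [set orb A | A in ksubsets m k].
Proof. by move=> DC ak cD; apply: imsetS; exact: Fam_sub. Qed.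

Lemma OF_count a D : D :&: C = set0 -> ('C(L, a) <= L * #|OF a D|)%N.
Proof.
move=> DC; rewrite -(card_Fam a DC); apply: count_orbits => A AF.
exact: orb_Fam.
Qed.

Section Fams.
Variables (k : nat) (Dof : nat -> {set T}).
Local Notation U s := (\bigcup_(a <- s) OF a (Dof a)).

Lemma memU s O : O \in U s -> exists2 b, b \in s & O \in OF b (Dof b).
Proof.
elim: s => [|a s IH]; first by rewrite big_nil inE.
rewrite big_cons inE => /orP [H|/IH [b bs Hb]]; first by exists a; rewrite ?inE ?eqxx.
by exists b; rewrite // inE bs orbT.
Qed.

Lemma fams s : uniq s ->
  (forall a, a \in s -> [/\ Dof a :&: C = set0, (a <= k)%N & #|Dof a| = (k - a)%N]) ->
  (\sum_(a <- s) #|OF a (Dof a)| <= #|[set orb A | A in ksubsets m k]|)%N.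
Proof.
move=> Us H.
suff [E S] : #|U s| = (\sum_(a <- s) #|OF a (Dof a)|)%N /\
            U s \subset [set orb A | A in ksubsets m k].
  by rewrite -E subset_leq_card.
elim: s Us H => [|a s IH] /= Us H; first by rewrite !big_nil cards0 sub0set.
move/andP: Us => [nas Us].
have [DC ak cD] := H a (mem_head _ _).
have [IH1 IH2] := IH Us (fun b bs => H b (@mem_behead _ (a :: s) b bs)).
rewrite !big_cons; split; last by rewrite subUset IH2 (OF_sub DC ak cD).
rewrite cardsU.
have -> : OF a (Dof a) :&: U s = set0.
  apply/setP => O; rewrite !inE; apply/negP => /andP [O1 /memU [b bs O2]].
  have [DbC _ _] := H b (@mem_behead _ (a :: s) b bs).
  have ab : a != b by apply: contraNneq nas => ->.
  by move: (OF_disj DC DbC ab) => /setP /(_ O); rewrite !inE O1 O2.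
by rewrite cards0 subn0 IH1.
Qed.
End Fams.

Definition Dsel k a := [set y in take (k - a) (enum (~: C))].

Lemma DselC k a : Dsel k a :&: C = set0.
Proof.
apply/setP => y; rewrite !inE; apply/negP => /andP [/mem_take].
by rewrite mem_enum inE => /negP.
Qed.

Lemma card_Dsel k a : (k - a <= m - L)%N -> #|Dsel k a| = (k - a)%N.
Proof.
move=> h; rewrite cardsE; have /card_uniqP -> := take_uniq (k - a) (enum_uniq (mem (~: C))).
rewrite size_takel // -cardE.
have hc : #|~: C| = (m - L)%N by move: (cardsC C); rewrite card_ord; lia.
by rewrite hc.
Qed.

Lemma use_fams k s : uniq s ->
  all (fun a => (a <= k) && (k - a <= m - L))%N s ->
  (\sum_(a <- s) #|OF a (Dsel k a)| <= #|[set orb A | A in ksubsets m k]|)%N.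
Proof.
move=> Us /allP H; apply: fams => // a /H /andP [ak kaL].
by split; rewrite ?DselC ?card_Dsel.
Qed.

Lemma OFc k a : ('C(L, a) <= L * #|OF a (Dsel k a)|)%N.
Proof. exact/OF_count/DselC. Qed.

End S.

Lemma glob m (g : 'S_m) k : (forall y, #|porbit g y| <= 3)%N ->
  ('C(m, k) <= 6 * #|[set orbit 'P^* <[g]> A | A in ksubsets m k]|)%N.
Proof.
move=> H3.
have g6 : g ^+ 6 = 1.
  apply/permP => y; rewrite perm1 permX.
  have c0 := card_porbit_neq0 g y; have c3 := H3 y.
  have dv : (#|porbit g y| %| 6)%N.
    have : #|porbit g y| = 1%N \/ #|porbit g y| = 2 \/ #|porbit g y| = 3 by lia.
    by case=> [->|[->|->]].
  by rewrite -(divnK dv) iter_mul_fix // iter_porbit.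
have -> : 'C(m, k) = #|ksubsets m k| by rewrite /ksubsets card_draws card_ord.
apply: count_orbits => A _.
apply: (@leq_trans #|[set (g ^+ (val i)) @: A | i : 'I_6]|); last first.
  by rewrite (leq_trans (leq_imset_card _ _)) // card_ord.
apply: subset_leq_card; apply/subsetP => B; rewrite inE => /andP [/orbP [i ->] _].
apply/imsetP; exists (Ordinal (ltn_pmod i (isT : 0 < 6)%N)) => //=.
by rewrite expg_mod.
Qed.

Open Scope nat_scope.
Lemma bin_mono n a b : a <= b -> 2 * b <= n -> 'C(n, a) <= 'C(n, b).
Proof.
elim: b a => [|b IH] a ab bn; first by move: ab; rewrite leqn0 => /eqP ->.
move: ab; rewrite leq_eqVlt => /orP [/eqP -> //|ab].
apply: leq_trans (IH a ab _) _; first lia.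
have E := mul_bin_left n b.
have : b.+1 <= n - b by lia.
move: E; set y := 'C(n, b.+1); set z := 'C(n, b) => E h.
have : b.+1 * z <= b.+1 * y by rewrite E leq_mul2r h orbT.
by rewrite leq_mul2l.
Qed.
Lemma bin_uni n j a : j <= a -> a <= n - j -> 2 * j <= n -> 'C(n, j) <= 'C(n, a).
Proof.
move=> ja an jn; have [h|h] := leqP (2 * a) n; first exact: bin_mono.
rewrite -[X in _ <= X](@bin_sub n a); last lia.
apply: bin_mono; lia.
Qed.
Lemma bin3 n : 'C(n, 3) * 6 = n * (n - 1) * (n - 2).
Proof.
rewrite (bin_ffact n 3) !ffactnSr ffactn0; lia.
Qed.
Lemma bin2' n : 'C(n, 2) * 2 = n * (n - 1).
Proof. rewrite (bin_ffact n 2) !ffactnSr ffactn0; lia. Qed.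

Lemma num7 L n c : 6 < L -> c * 6 = L * (L - 1) * (L - 2) -> c <= L * n -> n <= 4 -> False.
Proof.
move=> h1 h2 h3 h4.
have a : 30 <= (L - 1) * (L - 2) by apply: (@leq_mul 6 5); lia.
have b : L * 30 <= L * ((L - 1) * (L - 2)) by rewrite leq_mul2l a orbT.
have c1 : L * n <= L * 4 by rewrite leq_mul2l h4 orbT.
rewrite mulnA -h2 in b. lia.
Qed.

Theorem lemma3p2 (m k : nat) (H : {set 'S_m}) (g : 'S_m) :
  (3 <= k)%N -> (2 * k <= m)%N ->
  (H = [set: 'S_m] \/ H = 'Alt_('I_m)) ->
  g \in H ->
  (ncycles_ksub k g <= 4)%N ->
  (m <= 7)%N.
Proof.
move=> k3 km _ _; rewrite /ncycles_ksub.
set N := #|_| => hN.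
rewrite leqNgt; apply/negP => m8.
have x0 : 'I_m := Ordinal (leq_ltn_trans (leq0n 7) m8).
have [x _ Hx] := @arg_maxnP 'I_m x0 predT (fun y => #|porbit g y|) isT.
have Lm : #|porbit g x| <= m by have := max_card (porbit g x); rewrite card_ord.
have L0 := card_porbit_neq0 g x.
have [L3|L4] := leqP #|porbit g x| 3.
  have h1 := glob k (fun y => leq_trans (Hx y isT) L3).
  have h2 : 'C(m, 3) <= 'C(m, k) by apply: bin_uni; lia.
  have h3 := bin3 m.
  have h4 : 8 * 7 * 6 <= m * (m - 1) * (m - 2) by rewrite !leq_mul //; lia.
  rewrite -/N in h1; lia.
have [L7|L6] := leqP 7 #|porbit g x|.
  have [ka|ka] := leqP (k - 3) (m - #|porbit g x|).
    have h1 := @use_fams m g x k [:: 3] isT.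
    rewrite /= k3 ka big_cons big_nil addn0 -/N in h1; have {}h1 := h1 isT.
    have h2 := OFc g x k 3.
    have h3 := bin3 #|porbit g x|.
    by case: (num7 L7 h3 h2 (leq_trans h1 hN)).
  have h1 := @use_fams m g x k [:: k] isT.
  rewrite /= leqnn subnn leq0n big_cons big_nil addn0 -/N in h1; have {}h1 := h1 isT.
  have h2 := OFc g x k k.
  have h3 := bin3 #|porbit g x|.
  have h4 : 'C(#|porbit g x|, 3) <= 'C(#|porbit g x|, k) by apply: bin_uni; lia.
  by case: (num7 L7 h3 (leq_trans h4 h2) (leq_trans h1 hN)).
have [kR|kR] := leqP k (m - #|porbit g x|).
  have h1 := @use_fams m g x k [:: 0; 1; 2; 3] isT.
  have hall : all (fun a => (a <= k) && (k - a <= m - #|porbit g x|)) [:: 0; 1; 2; 3].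
    by apply/allP => a; rewrite !inE => /or4P [] /eqP ->; apply/andP; split; lia.
  have {}h1 := h1 hall; rewrite !big_cons big_nil -/N in h1.
  have c0 := OFc g x k 0; have c1 := OFc g x k 1; have c2 := OFc g x k 2; have c3 := OFc g x k 3.
  rewrite bin0 in c0; rewrite bin1 in c1.
  have e2 := bin2' #|porbit g x|; have e3 := bin3 #|porbit g x|.
  have : #|porbit g x| = 4 \/ #|porbit g x| = 5 \/ #|porbit g x| = 6 by lia.
  by case=> [hL|[hL|hL]]; rewrite hL in c0 c1 c2 c3 e2 e3; lia.
have : #|porbit g x| = 5 \/ #|porbit g x| = 6 by lia.
case=> hL.
  have h1 := @use_fams m g x k [:: 1; 2; 3] isT.
  have hall : all (fun a => (a <= k) && (k - a <= m - #|porbit g x|)) [:: 1; 2; 3].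
    by apply/allP => a; rewrite !inE => /or3P [] /eqP ->; apply/andP; split; lia.
  have {}h1 := h1 hall; rewrite !big_cons big_nil -/N in h1.
  have c1 := OFc g x k 1; have c2 := OFc g x k 2; have c3 := OFc g x k 3.
  rewrite bin1 in c1.
  have e2 := bin2' #|porbit g x|; have e3 := bin3 #|porbit g x|.
  rewrite hL in c1 c2 c3 e2 e3; lia.
have h1 := @use_fams m g x k [:: 2; 3] isT.
have hall : all (fun a => (a <= k) && (k - a <= m - #|porbit g x|)) [:: 2; 3].
  by apply/allP => a; rewrite !inE => /orP [] /eqP ->; apply/andP; split; lia.
have {}h1 := h1 hall; rewrite !big_cons big_nil -/N in h1.
have c2 := OFc g x k 2; have c3 := OFc g x k 3.
have e2 := bin2' #|porbit g x|; have e3 := bin3 #|porbit g x|.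
rewrite hL in c2 c3 e2 e3; lia.
Qed.
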